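(* Let $P$ be a $d$-dimensional $k$-template and let $e=e(P)$. There is a simple $e$-dimensional $k$-template $Q$ such that for every nonempty set $X$, $L(X^e,Q)$ is embeddable into $L(X^d,P)$.
   Context: Here $1\le d<\omega$, $2\le k<\omega$. A $d$-dimensional $k$-template is a set $P$ of $d$-tuples with $|P|=k$. $P$ is simple if for every $m<d$ there are $x,y\in P$ such that for all $i<d$, $x_i=y_i$ iff $i\ne m$. If $P,Q$ are $d$-dimensional templates, $Q$ is a homomorphic image of $P$ if there is a surjection $f:P\to Q$ such that for all $x,y\in P$ and $i<d$, $x_i=y_i$ implies $f(x)_i=f(y)_i$. $L(X^d,P)$ is the $k$-hypergraph with vertex set $X^d$ whose edges are the $k$-templates $R\subseteq X^d$ that are homomorphic images of $P$. A set $I\subseteq\{0,\dots,d-1\}$ is a distinguisher for $P$ if for all distinct $x,y\in P$ there is $i\in I$ with $x_i\ne y_i$; $e(P)$ is the least cardinality of a distinguisher. A map $f:V_1\to V_2$ embeds a $k$-hypergraph $H_1=(V_1,E_1)$ into $H_2=(V_2,E_2)$ if it is an isomorphism of $H_1$ onto a subhypergraph of $H_2$ (a hypergraph $(V',E')$ with $V'\subseteq V_2$, $E'\subseteq E_2$). *)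

(* Defs.v *)
From mathcomp Require Import all_boot.
Set Implicit Arguments. Unset Strict Implicit. Unset Printing Implicit Defensive.

Definition tup (d : nat) (T : Type) := 'I_d -> T.

Definition is_kset (U : Type) (k : nat) (R : U -> Prop) : Prop :=
  exists g : 'I_k -> U, injective g /\ (forall x, R x <-> exists i, g i = x).

Definition template (d k : nat) (P : tup d nat -> Prop) : Prop :=
  1 <= d /\ 2 <= k /\ is_kset k P.

Definition simple_template (d : nat) (T : Type) (P : tup d T -> Prop) : Prop :=
  forall m : 'I_d, exists x y, P x /\ P y /\ (forall i, x i = y i <-> i <> m).

Definition hom_image (d : nat) (T U : Type) (P : tup d T -> Prop)
    (Q : tup d U -> Prop) : Prop :=
  exists f : tup d T -> tup d U,
    (forall x, P x -> Q (f x)) /\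
    (forall y, Q y -> exists x, P x /\ f x = y) /\
    (forall x y, P x -> P y -> forall i, x i = y i -> f x i = f y i).

(* Edges of the k-hypergraph L(X^d, P), for P a k-template;
   its vertex set is all of tup d X. *)
Definition L_edge (X : Type) (d k : nat) (P : tup d nat -> Prop)
    (R : tup d X -> Prop) : Prop :=
  is_kset k R /\ hom_image P R.

Definition distinguisher (d : nat) (T : Type) (P : tup d T -> Prop)
    (I : {set 'I_d}) : Prop :=
  forall x y, P x -> P y -> x <> y -> exists i, i \in I /\ x i <> y i.

Definition is_eP (d : nat) (T : Type) (P : tup d T -> Prop) (e : nat) : Prop :=
  (exists I, distinguisher P I /\ #|I| = e) /\
  (forall I, distinguisher P I -> e <= #|I|).

Definition img (A B : Type) (f : A -> B) (R : A -> Prop) : B -> Prop :=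
  fun y => exists x, R x /\ f x = y.

(* f : V1 -> V2 embeds H1 = (V1,E1) into H2 = (V2,E2): f is an isomorphism
   of H1 onto a subhypergraph of H2, i.e. f is injective and maps every
   edge of H1 onto an edge of H2. *)
Definition embeds (V1 V2 : Type) (E1 : (V1 -> Prop) -> Prop)
    (E2 : (V2 -> Prop) -> Prop) : Prop :=
  exists f : V1 -> V2, injective f /\ (forall R, E1 R -> E2 (img f R)).

(* Main.v *)
Require Import Defs.
From mathcomp Require Import all_boot.
From Stdlib Require Import Classical FunctionalExtensionality.
Set Implicit Arguments.

Section Aux.
Variable d : nat.
Variable I : {set 'I_d}.

Definition pi (T : Type) (x : tup d T) : tup #|I| T := fun i => x (enum_val i).

Lemma in_I_val (i : 'I_d) : i \in I -> exists j : 'I_#|I|, enum_val j = i.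
Proof. move=> Hi; exists (enum_rank_in Hi i); exact: enum_rankK_in. Qed.

Lemma pi_eq_in (T : Type) (x y : tup d T) :
  pi x = pi y -> forall i, i \in I -> x i = y i.
Proof.
move=> H i /in_I_val [j <-]; exact: (f_equal (fun f => f j) H).
Qed.

Lemma pi_inj (T : Type) (P : tup d T -> Prop) x y :
  distinguisher P I -> P x -> P y -> pi x = pi y -> x = y.
Proof.
move=> D Px Py E; apply: NNPP => Hne.
have [i [Hi Hxy]] := D x y Px Py Hne.
by apply: Hxy; apply: pi_eq_in E i Hi.
Qed.

Definition emb (X : Type) (c : X) (z : tup #|I| X) : tup d X :=
  fun j => match [pick i | enum_val i == j] with Some i => z i | None => c end.

Lemma emb_val (X : Type) (c : X) z (i : 'I_#|I|) : emb c z (enum_val i) = z i.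
Proof.
rewrite /emb; case: pickP => [j /eqP Hj | H].
  by have -> := enum_val_inj Hj.
by have := H i; rewrite eqxx.
Qed.

Lemma emb_inj (X : Type) (c : X) : injective (emb c).
Proof.
move=> z1 z2 H; apply: functional_extensionality => i.
by rewrite -(emb_val c z1) -(emb_val c z2) H.
Qed.

End Aux.
Arguments pi {d} I {T} x.
Arguments emb {d} I {X} c z.
Arguments emb_inj {d} I {X} c.

Theorem lemma1p9 (d k : nat) (P : tup d nat -> Prop) (e : nat) :
  template k P -> is_eP P e ->
  exists Q : tup e nat -> Prop,
    template k Q /\ simple_template Q /\
    (forall X : Type, inhabited X ->
       embeds (@L_edge X e k Q) (@L_edge X d k P)).
Proof.
move=> [Hd [Hk [g [ginj gP]]]] [[I [D He]] Hmin]; subst e.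
exists (img (@pi d I nat) P).
have Pg : forall i, P (g i) by move=> i; apply/gP; exists i.
split; [split; [|split]|split].
-
  have Hne : g (Ordinal (ltn_trans (ltnSn 0) Hk)) <> g (Ordinal Hk).
    by move/ginj/(f_equal val).
  have [i [Hi _]] := D _ _ (Pg _) (Pg _) Hne.
  by apply/card_gt0P; exists i.
- exact: Hk.
- exists (fun i => pi I (g i)); split.
    by move=> a b /(pi_inj D (Pg a) (Pg b)) /ginj.
  move=> y; split.
    by move=> [x [/gP [i <-] <-]]; exists i.
  by move=> [i <-]; exists (g i).
- move=> m.
  have Hlt : #|I :\ enum_val m| < #|I|.
    by rewrite (cardsD1 (enum_val m) I) enum_valP add1n ltnSn.
  have ND : ~ distinguisher P (I :\ enum_val m).
    by move=> /Hmin; rewrite leqNgt Hlt.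
  move: ND; rewrite /distinguisher => ND.
  apply: NNPP => Hno; apply: ND => x y Px Py Hxy.
  apply: NNPP => Hn.
  have Hagree : forall i, i \in I :\ enum_val m -> x i = y i.
    move=> i Hi; apply: NNPP => Hne; apply: Hn; by exists i.
  apply: Hno; exists (pi I x), (pi I y); split; first by exists x.
  split; first by exists y.
  move=> i; split.
    move=> Heq Him; subst i; apply: Hxy.
    apply: (pi_inj D Px Py); apply: functional_extensionality => j.
    case: (eqVneq j m) => [-> //|Hjm].
    apply: Hagree; rewrite !inE enum_valP andbT.
    by apply: contra Hjm => /eqP/enum_val_inj ->.
  move=> Him; apply: Hagree; rewrite /pi !inE enum_valP andbT.
  apply/negP => /eqP/enum_val_inj Hi; exact: Him Hi.
- move=> X [c]; exists (emb I c); split; first exact: emb_inj.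
  move=> R [[gR [gRinj gRP]] [h [h1 [h2 h3]]]]; split.
    exists (fun i => emb I c (gR i)); split.
      by move=> a b /(emb_inj I c) /gRinj.
    move=> y; split.
      by move=> [x [/gRP [i <-] <-]]; exists i.
    by move=> [i <-]; exists (gR i); split => //; apply/gRP; exists i.
  exists (fun x => emb I c (h (pi I x))); split; [|split].
  + move=> x Px; exists (h (pi I x)); split => //; apply: h1; by exists x.
  + move=> y [r [Rr <-]].
    have [q [[x [Px <-]] Hq]] := h2 r Rr.
    by exists x; rewrite Hq.
  + move=> x y Px Py i Hi; rewrite /emb; case: pickP => [j /eqP Hj|//].
    apply: h3; [by exists x | by exists y |].
    by rewrite /pi Hj.
Qed.
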